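(* Let $\mathcal C$ be an $(n,k,r,3)$-SLRC, let $G=([n],\mathcal E)$ be a minimal repair graph of $\mathcal C$, and let $B$, $C_1$ and $\mathcal E_{\mathrm{blue}}$ be as defined in the context. Then $$|\mathcal E_{\mathrm{blue}}|\ge\frac{|B|+|C_1|}{r}.$$
   Context: For an $[n,k]$ linear code $\mathcal C$ over a finite field $\mathbb F$, a recovering set of $i\in[n]$ is a set $R\subseteq[n]\setminus\{i\}$ with nonzero $a_j\in\mathbb F$ such that $x_i=\sum_{j\in R}a_jx_j$ for all $x\in\mathcal C$; standing assumption: recovering sets have size $2\le|R|\le r<k$. $\mathcal C$ is an $(n,k,r,t)$-SLRC if every $E\subseteq[n]$ with $|E|\le t$ can be indexed $\{i_1,\dots,i_{|E|}\}$ so that each $i_\ell$ has a recovering set $R_\ell\subseteq([n]\setminus E)\cup\{i_1,\dots,i_{\ell-1}\}$. A repair graph of $\mathcal C$ is a directed acyclic graph on vertex set $[n]$ such that for every vertex $i$ with nonempty in-neighbourhood $\mathrm{In}(i)$, $\mathrm{In}(i)$ is a recovering set of $i$. A source is a vertex with no in-neighbours; $S(G)$ is the set of sources. A minimal repair graph is a repair graph with the minimum number of sources among all repair graphs of $\mathcal C$. $\mathrm{Out}(v)$ is the set of out-neighbours of $v$ and $\mathrm{Out}^2(v)=\bigcup_{u\in\mathrm{Out}(v)}\mathrm{Out}(u)\setminus\mathrm{Out}(v)$. Define $B=\{v\in S(G):|\mathrm{Out}(v)|=2\}$, $C_1=\{v\in S(G):|\mathrm{Out}(v)|=1,\ |\mathrm{Out}^2(v)|=1\}$,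 $C_2=\{v\in S(G):|\mathrm{Out}(v)|=1,\ |\mathrm{Out}^2(v)|\ge2\}$. An edge is green if its tail is the unique out-neighbour of some source in $C_1\cup C_2$. For $v\in B\cup C_1$, a non-green edge $e$ is a blue edge belonging to $v$ if either $v\in B$ and the tail of $e$ lies in $\mathrm{Out}(v)$, or $v\in C_1$ and the tail of $e$ lies in $\mathrm{Out}^2(v)$. $\mathcal E_{\mathrm{blue}}$ is the set of all edges that are blue edges belonging to some $v\in B\cup C_1$. *)

(* Defs.v *)
From HB Require Import structures.
From mathcomp Require Import all_boot all_order all_algebra.
Set Implicit Arguments. Unset Strict Implicit. Unset Printing Implicit Defensive.
Import GRing.Theory.
Local Open Scope ring_scope.

Section SLRC.
Variables (F : finFieldType) (n : nat).

(* A linear code of length n is a subspace C of F^n = 'rV[F]_n;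
   its dimension is \dim C.  Coordinate i of x is x 0 i. *)

Definition recovering_set (C : {vspace 'rV[F]_n}) (r : nat) (i : 'I_n)
    (R : {set 'I_n}) : Prop :=
  [/\ i \notin R, (2 <= #|R|)%N, (#|R| <= r)%N &
   exists a : 'I_n -> F, (forall j, j \in R -> a j != 0) /\
     (forall x, x \in C -> x 0 i = \sum_(j in R) a j * x 0 j)].

Definition SLRC (C : {vspace 'rV[F]_n}) (k r t : nat) : Prop :=
  \dim C = k /\
  forall E : {set 'I_n}, (#|E| <= t)%N ->
    exists s : seq 'I_n, [/\ uniq s, [set x in s] = E &
      forall (s1 s2 : seq 'I_n) (i : 'I_n), s = s1 ++ i :: s2 ->
        exists R, recovering_set C r i R /\
          R \subset (~: E) :|: [set x in s1]].

(* Directed graphs on [n]: a set of edges (tail, head). *)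
Definition grel (G : {set 'I_n * 'I_n}) : rel 'I_n := fun u v => (u, v) \in G.
Definition acyclic (G : {set 'I_n * 'I_n}) : Prop :=
  forall u v, (u, v) \in G -> ~~ connect (grel G) v u.
Definition In_ (G : {set 'I_n * 'I_n}) (i : 'I_n) : {set 'I_n} :=
  [set j | (j, i) \in G].
Definition Out (G : {set 'I_n * 'I_n}) (v : 'I_n) : {set 'I_n} :=
  [set u | (v, u) \in G].
Definition Out2 (G : {set 'I_n * 'I_n}) (v : 'I_n) : {set 'I_n} :=
  (\bigcup_(u in Out G v) Out G u) :\: Out G v.
Definition sources (G : {set 'I_n * 'I_n}) : {set 'I_n} :=
  [set v | In_ G v == set0].

Definition repair_graph (C : {vspace 'rV[F]_n}) (r : nat)
    (G : {set 'I_n * 'I_n}) : Prop :=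
  acyclic G /\
  forall i, In_ G i != set0 -> recovering_set C r i (In_ G i).

Definition minimal_repair_graph (C : {vspace 'rV[F]_n}) (r : nat)
    (G : {set 'I_n * 'I_n}) : Prop :=
  repair_graph C r G /\
  forall G', repair_graph C r G' -> (#|sources G| <= #|sources G'|)%N.

Definition Bset (G : {set 'I_n * 'I_n}) : {set 'I_n} :=
  [set v in sources G | #|Out G v| == 2].
Definition C1set (G : {set 'I_n * 'I_n}) : {set 'I_n} :=
  [set v in sources G | (#|Out G v| == 1) && (#|Out2 G v| == 1)].
Definition C2set (G : {set 'I_n * 'I_n}) : {set 'I_n} :=
  [set v in sources G | (#|Out G v| == 1) && (2 <= #|Out2 G v|)%N].

Definition green (G : {set 'I_n * 'I_n}) (e : 'I_n * 'I_n) : bool :=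
  (e \in G) && [exists v in C1set G :|: C2set G, Out G v == [set e.1]].

Definition blue_of (G : {set 'I_n * 'I_n}) (v : 'I_n) (e : 'I_n * 'I_n) : bool :=
  [&& e \in G, ~~ green G e &
    ((v \in Bset G) && (e.1 \in Out G v)) ||
    ((v \in C1set G) && (e.1 \in Out2 G v))].

Definition Eblue (G : {set 'I_n * 'I_n}) : {set 'I_n * 'I_n} :=
  [set e | [exists v in Bset G :|: C1set G, blue_of G v e]].

End SLRC.

(* Main.v *)
Require Import Defs.
From HB Require Import structures.
From mathcomp Require Import all_boot all_order all_algebra.
From Stdlib Require Import IndefiniteDescription Lia.
From mathcomp Require Import zify.
Set Implicit Arguments. Unset Strict Implicit. Unset Printing Implicit Defensive.

Section Build.
Variables (F : finFieldType) (n : nat) (C : {vspace 'rV[F]_n}) (r : nat).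

Lemma conn_mono (G : {set 'I_n * 'I_n}) (o : 'I_n -> nat) :
  (forall u v, (u, v) \in G -> o u < o v) ->
  forall x y, connect (Defs.grel G) x y -> o x <= o y.
Proof.
move=> Hlt x y /connectP [p Hp ->]; elim: p x Hp => [|z p IH] x //= /andP [Hxz Hp].
exact: leq_trans (ltnW (Hlt _ _ Hxz)) (IH _ Hp).
Qed.

Lemma build (S' : {set 'I_n}) (o : 'I_n -> nat) (Rf : 'I_n -> {set 'I_n}) :
  (forall i, i \notin S' -> recovering_set C r i (Rf i) /\
     forall j, j \in Rf i -> o j < o i) ->
  exists G', repair_graph C r G' /\ sources G' \subset S'.
Proof.
move=> H.
pose G' := [set p : 'I_n * 'I_n | (p.2 \notin S') && (p.1 \in Rf p.2)].
have InE i : In_ G' i = if i \in S' then set0 else Rf i.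
  apply/setP => j; rewrite !inE /=; case: (i \in S') => //=; by rewrite inE.
have Hlt u v : (u, v) \in G' -> o u < o v.
  rewrite inE /= => /andP [Hv Hu]; exact: (proj2 (H _ Hv)).
exists G'; split; first split.
- move=> u v Huv; apply/negP => /(conn_mono Hlt) Hle.
  by have := leq_trans (Hlt _ _ Huv) Hle; rewrite ltnn.
- move=> i; rewrite InE; case: ifP => [_|/negbT Hi _]; first by rewrite eqxx.
  exact: (proj1 (H _ Hi)).
- apply/subsetP => i; rewrite inE InE; case: ifP => // /negbT Hi /eqP HR.
  have [_ H2 _ _] := proj1 (H _ Hi).
  by move: H2; rewrite HR cards0.
Qed.
End Build.

Section Core.
Variables (F : finFieldType) (n k r : nat) (C : {vspace 'rV[F]_n})
  (G : {set 'I_n * 'I_n}).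
Hypothesis HS : SLRC C k r 3.
Hypothesis HG : minimal_repair_graph C r G.

Lemma noloop x : (x, x) \notin G.
Proof.
apply/negP => Hx; have [[Hac _] _] := HG.
by have := Hac _ _ Hx; rewrite connect0.
Qed.

Definition anc i := [set j | connect (Defs.grel G) j i].

Lemma anc_lt j i : (j, i) \in G -> #|anc j| < #|anc i|.
Proof.
move=> Hji; apply: proper_card; apply/properP; split.
  apply/subsetP => x; rewrite !inE => Hx.
  apply: connect_trans Hx _; exact: connect1.
exists i; first by rewrite inE connect0.
have [[Hac _] _] := HG; by rewrite inE; apply: Hac.
Qed.

Lemma core (E A : {set 'I_n}) : #|E| <= 3 ->
  (forall x w, (x, w) \in G -> x \in E -> w \in E :|: A) ->
  #|sources G :&: E| <= #|A|.
Proof.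
move=> HE3 Hed.
have [_ HE] := HS; have [s [Hu Hs Hseq]] := HE E HE3.
set S := sources G; set S' := (S :\: E) :|: A.
pose o i := if i \in E then n.+1 + index i s else #|anc i|.
have Hon j : j \notin E -> o j <= n.
  by move=> Hj; rewrite /o (negbTE Hj); apply: leq_trans (max_card _) _; rewrite card_ord.
have Hex i : exists R, i \notin S' -> recovering_set C r i R /\
     forall j, j \in R -> o j < o i.
  case HiE: (i \in E).
    have Hi : i \in s by move: HiE; rewrite -Hs inE.
    set p := index i s.
    have Hsp : s = take p s ++ i :: drop p.+1 s.
      have Hp : p < size s by rewrite index_mem.
      by rewrite -{1}(cat_take_drop p s) (drop_nth i Hp) /p nth_index.
    have [R [HR Hsub]] := Hseq _ _ _ Hsp.
    exists R => _; split=> // j Hj.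
    have := subsetP Hsub j Hj; rewrite !inE => /orP [HjE|Hjt].
      by rewrite /o HiE; apply: leq_ltn_trans (Hon _ HjE) _; rewrite ltnS leq_addr.
    case HjE: (j \in E); last first.
      by rewrite /o HiE; apply: leq_ltn_trans (Hon j (negbT HjE)) _; rewrite ltnS leq_addr.
    rewrite /o HiE HjE ltn_add2l.
    have -> : index j s = index j (take p s).
      by rewrite -{1}(cat_take_drop p s) index_cat Hjt.
    apply: leq_trans (_ : size (take p s) <= p); first by rewrite index_mem.
    by rewrite size_take_min geq_minl.
  exists (In_ G i) => HiS.
  have HiS0 : i \notin S.
    by apply: contra HiS => HiS; rewrite /S' in_setU in_setD HiS HiE.
  have HIn : In_ G i != set0 by move: HiS0; rewrite /S inE.
  have [[_ Hrep] _] := HG.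
  split; first exact: Hrep.
  move=> j; rewrite inE => Hji.
  have HjE : j \notin E.
    apply/negP => HjE; have := Hed _ _ Hji HjE; rewrite inE HiE /= => HiA.
    by move: HiS; rewrite /S' inE HiA orbT.
  by rewrite /o HiE (negbTE HjE); apply: anc_lt.
pose Rf i := proj1_sig (constructive_indefinite_description _ (Hex i)).
have [G' [HG' Hsub]] : exists G', repair_graph C r G' /\ sources G' \subset S'.
  apply: (@build F n C r S' o Rf) => i Hi.
  exact: (proj2_sig (constructive_indefinite_description _ (Hex i)) Hi).
have [_ Hmin] := HG.
have H1 := Hmin _ HG'.
have H2 := subset_leq_card Hsub.
have H3 : #|S'| <= #|S :\: E| + #|A|.
  by rewrite /S' cardsU leq_subr.
have H4 := cardsID E S.
rewrite -/S in H1.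
move: H1 H2 H3 H4; rewrite -/S; lia.
Qed.
End Core.

Lemma card3le (T : finType) (x y z : T) : #|[set x; y; z]| <= 3.
Proof.
have -> : [set x; y; z] = x |: (y |: [set z]) by apply/setP=> t; rewrite !inE orbA.
rewrite cardsU1 cardsU1 cards1; by case: (_ \notin _); case: (_ \notin _).
Qed.

Lemma card3 (T : finType) (x y z : T) : x != y -> x != z -> y != z ->
  #|[set x; y; z]| = 3.
Proof.
move=> Hxy Hxz Hyz.
have -> : [set x; y; z] = x |: (y |: [set z]) by apply/setP=> t; rewrite !inE orbA.
by rewrite cardsU1 cardsU1 cards1 !inE negb_or Hxy Hxz Hyz.
Qed.

Section Main.
Variables (F : finFieldType) (n k r : nat) (C : {vspace 'rV[F]_n})
  (G : {set 'I_n * 'I_n}).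
Hypothesis HS : SLRC C k r 3.
Hypothesis HG : minimal_repair_graph C r G.

Lemma OutE v u : (u \in Out G v) = ((v, u) \in G).
Proof. by rewrite inE. Qed.

Lemma src_noin s w : s \in sources G -> (w, s) \notin G.
Proof.
rewrite inE => /eqP H; apply/negP => Hw.
have : w \in In_ G s by rewrite inE.
by rewrite H inE.
Qed.

Lemma core_false (E A : {set 'I_n}) : #|E| <= 3 ->
  (forall x w, (x, w) \in G -> x \in E -> w \in E :|: A) ->
  #|A| < #|sources G :&: E| -> False.
Proof.
move=> H1 H2 H3; have := core HS HG H1 H2; by rewrite leqNgt H3.
Qed.

Lemma neq_src s u w : s \in sources G -> (w, u) \in G -> s != u.
Proof. by move=> Hs Hwu; apply/eqP => Hsu; move: Hwu; rewrite -Hsu (negbTE (src_noin _ Hs)). Qed.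

Lemma LB_ss v u1 u2 : v \in sources G -> Out G v = [set u1; u2] ->
  (forall w, (u1, w) \notin G) -> (forall w, (u2, w) \notin G) -> False.
Proof.
move=> Hv HO H1 H2.
apply: (@core_false [set v; u1; u2] set0 (card3le _ _ _)).
  move=> x w Hxw; rewrite !inE -orbA => /or3P [] /eqP Hx; subst x.
  - by move: Hxw; rewrite -OutE HO !inE => /orP [] ->; rewrite ?orbT.
  - by rewrite (negbTE (H1 w)) in Hxw.
  - by rewrite (negbTE (H2 w)) in Hxw.
rewrite inE in Hv; rewrite cards0; apply/card_gt0P; exists v; by rewrite !inE Hv eqxx.
Qed.

Lemma LB_sg v u1 u2 s2 : v \in sources G -> s2 \in sources G -> u1 != u2 ->
  Out G v = [set u1; u2] ->
  (forall w, (u1, w) \notin G) -> Out G s2 = [set u2] -> False.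
Proof.
move=> Hv Hs2 Hu HO H1 HO2.
have Hvs : v != s2.
  apply/eqP => Hvs; have : u1 \in Out G s2 by rewrite -Hvs HO !inE eqxx.
  by rewrite HO2 inE (negbTE Hu).
apply: (@core_false [set v; s2; u1] [set u2] (card3le _ _ _)).
  move=> x w Hxw; rewrite !inE -orbA => /or3P [] /eqP Hx; subst x.
  - by move: Hxw; rewrite -OutE HO !inE => /orP [] ->; rewrite ?orbT.
  - by move: Hxw; rewrite -OutE HO2 !inE => ->; rewrite ?orbT.
  - by rewrite (negbTE (H1 w)) in Hxw.
rewrite inE in Hv; rewrite inE in Hs2; rewrite cards1; apply: (@leq_trans #|[set v; s2]|); first by rewrite cards2 Hvs.
apply: subset_leq_card; apply/subsetP => t; rewrite !inE => /orP [] /eqP ->;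
  by rewrite ?Hv ?Hs2 !eqxx ?orbT.
Qed.

Lemma LB_gg v u1 u2 s1 s2 : v \in sources G -> s1 \in sources G ->
  s2 \in sources G -> u1 != u2 -> Out G v = [set u1; u2] ->
  Out G s1 = [set u1] -> Out G s2 = [set u2] -> False.
Proof.
move=> Hv Hs1 Hs2 Hu HO HO1 HO2.
have Hvs1 : v != s1.
  apply/eqP => Hvs; have : u2 \in Out G s1 by rewrite -Hvs HO !inE eqxx orbT.
  by rewrite HO1 inE eq_sym (negbTE Hu).
have Hvs2 : v != s2.
  apply/eqP => Hvs; have : u1 \in Out G s2 by rewrite -Hvs HO !inE eqxx.
  by rewrite HO2 inE (negbTE Hu).
have Hs12 : s1 != s2.
  apply/eqP => Hs; have : u1 \in Out G s2 by rewrite -Hs HO1 !inE eqxx.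
  by rewrite HO2 inE (negbTE Hu).
apply: (@core_false [set v; s1; s2] [set u1; u2] (card3le _ _ _)).
  move=> x w Hxw; rewrite !inE -orbA => /or3P [] /eqP Hx; subst x.
  - by move: Hxw; rewrite -OutE HO !inE => /orP [] ->; rewrite ?orbT.
  - by move: Hxw; rewrite -OutE HO1 !inE => ->; rewrite ?orbT.
  - by move: Hxw; rewrite -OutE HO2 !inE => ->; rewrite ?orbT.
rewrite inE in Hv; rewrite inE in Hs1; rewrite inE in Hs2; rewrite cards2 Hu.
apply: (@leq_trans #|[set v; s1; s2]|); first by rewrite (card3 Hvs1 Hvs2 Hs12).
apply: subset_leq_card; apply/subsetP => t; rewrite !inE -orbA => /or3P [] /eqP ->;
  by rewrite ?Hv ?Hs1 ?Hs2 !eqxx ?orbT.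
Qed.


Lemma in_SE t (E : {set 'I_n}) : t \in sources G -> t \in E -> t \in sources G :&: E.
Proof. by rewrite in_setI => -> ->. Qed.

Lemma LC_s v u a : v \in sources G -> Out G v = [set u] -> Out G u = [set a] ->
  (forall w, (a, w) \notin G) -> False.
Proof.
move=> Hv HO HOu Ha.
apply: (@core_false [set v; u; a] set0 (card3le _ _ _)).
  move=> x w Hxw; rewrite !inE -orbA => /or3P [] /eqP Hx; subst x.
  - by move: Hxw; rewrite -OutE HO !inE => ->; rewrite ?orbT.
  - by move: Hxw; rewrite -OutE HOu !inE => ->; rewrite ?orbT.
  - by rewrite (negbTE (Ha w)) in Hxw.
rewrite cards0; apply/card_gt0P; exists v; apply: in_SE => //; by rewrite !inE eqxx.
Qed.

Lemma LC_g v u a s : v \in sources G -> s \in sources G -> u != a ->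
  Out G v = [set u] -> Out G u = [set a] -> Out G s = [set a] -> False.
Proof.
move=> Hv Hs Hua HO HOu HOs.
have Hvs : v != s.
  apply/eqP => Hvs; have : u \in Out G s by rewrite -Hvs HO !inE eqxx.
  by rewrite HOs inE (negbTE Hua).
apply: (@core_false [set v; s; u] [set a] (card3le _ _ _)).
  move=> x w Hxw; rewrite !inE -orbA => /or3P [] /eqP Hx; subst x.
  - by move: Hxw; rewrite -OutE HO !inE => ->; rewrite ?orbT.
  - by move: Hxw; rewrite -OutE HOs !inE => ->; rewrite ?orbT.
  - by move: Hxw; rewrite -OutE HOu !inE => ->; rewrite ?orbT.
rewrite cards1; apply: (@leq_trans #|[set v; s]|); first by rewrite cards2 Hvs.
apply: subset_leq_card; apply/subsetP => t /set2P [] ->;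
  apply: in_SE => //; by rewrite !inE eqxx ?orbT.
Qed.

Lemma share v v' u : v \in sources G -> v' \in sources G -> v != v' ->
  Out G v = [set u] -> Out G v' = [set u] -> False.
Proof.
move=> Hv Hv' Hvv HO HO'.
apply: (@core_false [set v; v'] [set u]).
- by rewrite cards2; case: (_ != _).
- move=> x w Hxw; rewrite !inE => /orP [] /eqP Hx; subst x.
  + by move: Hxw; rewrite -OutE HO !inE => ->; rewrite ?orbT.
  + by move: Hxw; rewrite -OutE HO' !inE => ->; rewrite ?orbT.
rewrite cards1; apply: (@leq_trans #|[set v; v']|); first by rewrite cards2 Hvv.
apply: subset_leq_card; apply/subsetP => t /set2P [] ->;
  apply: in_SE => //; by rewrite !inE eqxx ?orbT.
Qed.

Lemma green_tail u w : green G (u, w) ->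
  exists2 s, s \in C1set G :|: C2set G & Out G s = [set u].
Proof. by case/andP => _ /existsP [s /andP [Hs /eqP HO]]; exists s. Qed.

Lemma sink_or_green u : (forall w, (u, w) \in G -> green G (u, w)) ->
  (forall w, (u, w) \notin G) \/
  exists2 s, s \in C1set G :|: C2set G & Out G s = [set u].
Proof.
move=> H; case: (boolP [exists w, (u, w) \in G]) => [/existsP [w Hw]|/existsPn Hn].
  by right; apply: (@green_tail u w); apply: H.
by left.
Qed.

Lemma C12_src s : s \in C1set G :|: C2set G -> s \in sources G.
Proof. by case/setUP; rewrite inE => /andP []. Qed.

Lemma noloop' x : (x, x) \notin G.
Proof. have := @noloop F n r C G HG x. exact. Qed.

Lemma Out2_1 v u : Out G v = [set u] -> Out2 G v = Out G u.
Proof.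
move=> HO; rewrite /Out2 HO big_set1; apply/setP => w; rewrite !inE.
case: eqP => // ->; by rewrite (negbTE (noloop' u)).
Qed.

Lemma blue_exists v : v \in Bset G :|: C1set G -> exists e, blue_of G v e.
Proof.
case: (boolP [exists e, blue_of G v e]) => [/existsP //|/existsPn Hno] HV; exfalso.
case/setUP: HV => [HB|HC].
- have := HB; rewrite inE => /andP [Hv /cards2P [u1 [u2 [Hu HO]]]].
  have Hg i : i \in Out G v -> forall w, (i, w) \in G -> green G (i, w).
    move=> Hi w Hiw; apply: contraNT (Hno (i, w)) => Hgr.
    by rewrite /blue_of Hiw Hgr HB /= Hi.
  have Hu1 : u1 \in Out G v by rewrite HO !inE eqxx.
  have Hu2 : u2 \in Out G v by rewrite HO !inE eqxx orbT.
  case: (sink_or_green (Hg _ Hu1)) => [S1|[s1 Hs1 HO1]];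
  case: (sink_or_green (Hg _ Hu2)) => [S2|[s2 Hs2 HO2]].
  + exact: (LB_ss Hv HO S1 S2).
  + exact: (LB_sg Hv (C12_src Hs2) Hu HO S1 HO2).
  + apply: (LB_sg Hv (C12_src Hs1) _ _ S2 HO1); first by rewrite eq_sym.
    by rewrite HO setUC.
  + exact: (LB_gg Hv (C12_src Hs1) (C12_src Hs2) Hu HO HO1 HO2).
- have := HC; rewrite inE => /andP [Hv /andP [/cards1P [u HO] H2]].
  rewrite (Out2_1 HO) in H2; have [a HOu] := cards1P H2.
  have Hua : u != a.
    apply/eqP => Hua; have : a \in Out G u by rewrite HOu inE.
    by rewrite -Hua inE (negbTE (noloop' u)).
  have Hg : forall w, (a, w) \in G -> green G (a, w).
    move=> w Haw; apply: contraNT (Hno (a, w)) => Hgr.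
    by rewrite /blue_of Haw Hgr HC (Out2_1 HO) HOu /= !inE ?eqxx ?orbT.
  case: (sink_or_green Hg) => [Sa|[s Hs HOs]].
  + exact: (LC_s Hv HO HOu Sa).
  + exact: (LC_g Hv (C12_src Hs) Hua HO HOu HOs).
Qed.

Definition gmap v := if v \in Bset G then v else odflt v [pick u in Out G v].

Lemma fib_facts v e : v \in Bset G :|: C1set G -> blue_of G v e ->
  (gmap v, e.1) \in G /\
  (v \in Bset G -> gmap v = v) /\
  (v \notin Bset G -> v \in C1set G /\ Out G v = [set gmap v]).
Proof.
move=> HV /and3P [_ _ Hb]; rewrite /gmap.
case: (boolP (v \in Bset G)) => HB.
  move: Hb; rewrite HB /= => /orP [|/andP [HC _]].
    by rewrite inE => H; split.
  exfalso; move: HB HC; rewrite !inE => /andP [_ /eqP ->] /andP [_ /andP [/eqP]] //.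
have HC : v \in C1set G by case/setUP: HV => //; rewrite (negbTE HB).
have := HC; rewrite inE => /andP [_ /andP [/cards1P [u HO] _]].
have -> : odflt v [pick u0 in Out G v] = u.
  case: pickP => [x|/(_ u)]; first by rewrite HO inE => /eqP.
  by rewrite HO inE eqxx.
move: Hb; rewrite (negbTE HB) HC /= (Out2_1 HO) inE => Hu.
split => //; split => // _; split => //. by move: HC; rewrite inE (Out2_1 HO).
Qed.

Lemma count_le : #|Bset G :|: C1set G| <= #|Eblue G| * r.
Proof.
set V := Bset G :|: C1set G.
pose f v := odflt (v, v) [pick e | blue_of G v e].
have Hf v : v \in V -> blue_of G v (f v).
  move=> Hv; rewrite /f; case: pickP => [e He|Hn] //.
  by have [e He] := blue_exists Hv; rewrite Hn in He.
have HfE v : v \in V -> f v \in Eblue G.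
  by move=> Hv; rewrite inE; apply/existsP; exists v; rewrite Hv Hf.
rewrite -sum1_card (partition_big f (mem (Eblue G))) //=.
rewrite -sum_nat_const; apply: leq_sum => e _.
set Fib := [set v in V | f v == e].
rewrite (eq_bigl (mem Fib)); last by move=> v; rewrite !inE.
rewrite sum1_card.
have Hfb v : v \in Fib -> v \in V /\ blue_of G v e.
  by rewrite inE => /andP [Hv /eqP <-]; split => //; apply: Hf.
case: (set_0Vmem Fib) => [->|[v0 Hv0]]; first by rewrite cards0.
have Hinj : {in Fib &, injective gmap}.
  move=> v v' /Hfb [Hv Hbv] /Hfb [Hv' Hbv'] Hg.
  have [Hg1 [HgB HgC]] := fib_facts Hv Hbv.
  have [Hg1' [HgB' HgC']] := fib_facts Hv' Hbv'.
  have srcV w : w \in V -> w \in sources G.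
    by case/setUP; rewrite inE => /andP [].
  case: (boolP (v \in Bset G)) => HB; case: (boolP (v' \in Bset G)) => HB'.
  - by rewrite -(HgB HB) -(HgB' HB').
  - exfalso; have [_ HO'] := HgC' HB'.
    have : v \in Out G v' by rewrite HO' -Hg (HgB HB) inE.
    by rewrite OutE (negbTE (src_noin _ (srcV _ Hv))).
  - exfalso; have [_ HO] := HgC HB.
    have : v' \in Out G v by rewrite HO Hg (HgB' HB') inE.
    by rewrite OutE (negbTE (src_noin _ (srcV _ Hv'))).
  - have [_ HO] := HgC HB; have [_ HO'] := HgC' HB'.
    apply/eqP; apply/negPn/negP => Hne.
    by apply: (share (srcV _ Hv) (srcV _ Hv') Hne HO); rewrite HO' Hg.
rewrite -(card_in_imset Hinj).
have Hsub : gmap @: Fib \subset In_ G e.1.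
  apply/subsetP => u /imsetP [v Hv ->]; have [Hv1 Hb] := Hfb _ Hv.
  by rewrite inE; exact: (proj1 (fib_facts Hv1 Hb)).
apply: leq_trans (subset_leq_card Hsub) _.
have [Hv1 Hb] := Hfb _ Hv0.
have HIn : In_ G e.1 != set0.
  apply/set0Pn; exists (gmap v0); rewrite inE; exact: (proj1 (fib_facts Hv1 Hb)).
have [[_ Hrep] _] := HG.
by have [_ _ -> _] := Hrep _ HIn.
Qed.

End Main.

Import GRing.Theory Num.Theory.
Local Open Scope ring_scope.

Theorem lemma6 (F : finFieldType) (n k r : nat) (C : {vspace 'rV[F]_n})
    (G : {set 'I_n * 'I_n}) :
  (r < k)%N ->
  SLRC C k r 3 ->
  minimal_repair_graph C r G ->
  ((#|Bset G| + #|C1set G|)%:R / r%:R : rat) <= (#|Eblue G|)%:R.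
Proof.
move=> _ HS HG.
have Hc := count_le HS HG.
have Hdisj : Bset G :&: C1set G = set0.
  apply/setP => v; rewrite !inE; apply/negbTE; apply/negP.
  by move=> /andP [/andP [_ /eqP H2] /andP [_ /andP [/eqP H1 _]]]; rewrite H2 in H1.
have HV : #|Bset G :|: C1set G| = (#|Bset G| + #|C1set G|)%N.
  by rewrite cardsU Hdisj cards0 subn0.
rewrite HV in Hc.
case: r HS HG Hc => [|r'] _ _ Hc.
  by rewrite invr0 mulr0 ler0n.
by rewrite ler_pdivrMr ?ltr0n // -natrM ler_nat.
Qed.
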